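(* Let $G=(V,E)$ be a graph on $n$ vertices such that $\deg(u)+\deg(v)\geq n+d-2$ for all pairs of distinct non-adjacent vertices $u,v$. If there is a vertex $w\in V$ such that every pair of non-adjacent vertices $u,v\in N_G(w)$ is $\mathcal{R}_d$-linked in $G$, then $G$ is rigid in $\mathbb{R}^d$.
   Context: A graph is rigid in $\mathbb{R}^d$ if some (equivalently every) generic $d$-dimensional bar-and-joint framework of it (coordinates algebraically independent over $\mathbb{Q}$) admits no continuous edge-length-preserving motion changing some pairwise distance. $r_d$ is the rank function of the $d$-dimensional generic rigidity matroid on edge sets (linear independence of rows of the rigidity matrix of a generic framework); a non-adjacent pair $\{u,v\}$ is $\mathcal{R}_d$-linked in $G$ if $r_d(G+uv)=r_d(G)$. *)

(* Defs.v *)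
From HB Require Import structures.
From mathcomp Require Import all_boot all_order all_algebra.
From mathcomp Require Import mpoly.
From mathcomp Require Import reals.

Set Implicit Arguments.
Unset Strict Implicit.
Unset Printing Implicit Defensive.

Import Order.TTheory GRing.Theory Num.Theory.
Local Open Scope ring_scope.

Definition simple_graph (n : nat) (e : rel 'I_n) : Prop :=
  ssrbool.symmetric e /\ ssrbool.irreflexive e.

Definition deg (n : nat) (e : rel 'I_n) (u : 'I_n) : nat := #|[set v | e u v]|.
Definition nbhd (n : nat) (e : rel 'I_n) (w : 'I_n) : {set 'I_n} := [set v | e w v].

Definition add_edge (n : nat) (e : rel 'I_n) (u v : 'I_n) : rel 'I_n :=
  fun x y => [|| e x y, (x == u) && (y == v) | (x == v) && (y == u)].

(** A d-dimensional framework of a graph on 'I_n : row i is the position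
    p(i) in R^d. *)
Notation framework R n d := 'M[R]_(n, d).

(** Generic framework: the n*d coordinates are algebraically independent
    over Q, i.e. no nonzero rational polynomial in n*d variables vanishes
    at them. *)
Definition generic (R : realType) (n d : nat) (P : framework R n d) : Prop :=
  forall q : {mpoly rat[n * d]}, q != 0 ->
    (map_mpoly (ratr : rat -> R) q).@[fun j => mxvec P 0 j] != 0.

Definition sqdist (R : realType) (n d : nat) (P : framework R n d) (i j : 'I_n) : R :=
  \sum_(k < d) (P i k - P j k) ^+ 2.

Definition in01 (R : realType) (t : R) : bool := (0 <= t) && (t <= 1).

Definition continuous_on01 (R : realType) (n d : nat)
  (f : R -> framework R n d) : Prop :=
  forall t, in01 t -> forall eps : R, 0 < eps ->
    exists2 delta : R, 0 < delta &
      forall s, in01 s -> `|s - t| < delta ->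
        forall i k, `|f s i k - f t i k| < eps.

Definition nontrivial_motion (R : realType) (n d : nat) (e : rel 'I_n)
  (P : framework R n d) : Prop :=
  exists f : R -> framework R n d,
    [/\ continuous_on01 f, f 0 = P,
        (forall t, in01 t -> forall u v, e u v -> sqdist (f t) u v = sqdist P u v) &
        exists t, exists u, exists v,
          in01 t /\ sqdist (f t) u v != sqdist P u v].

(** G is rigid in R^d: every generic framework admits no such motion
    (the context says "some (equivalently every)"; we use "every"). *)
Definition rigid (R : realType) (n d : nat) (e : rel 'I_n) : Prop :=
  forall P : framework R n d, generic P -> ~ nontrivial_motion e P.

(** Rigidity matrix of (G,P): one row (flattened via mxvec) for each ordered
    pair (u,v) with e u v (the rows for (u,v) and (v,u) are opposite, and
    pairs that are not edges give zero rows, so the rank is that of the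
    usual rigidity matrix). *)
Definition rig_row (R : realType) (n d : nat) (e : rel 'I_n)
  (P : framework R n d) (uv : 'I_n * 'I_n) : 'M[R]_(n, d) :=
  if e uv.1 uv.2 then
    \matrix_(i, k) (((i == uv.1)%:R - (i == uv.2)%:R) * (P uv.1 k - P uv.2 k))
  else 0.

Definition rigidity_matrix (R : realType) (n d : nat) (e : rel 'I_n)
  (P : framework R n d) : 'M[R]_(#|{: 'I_n * 'I_n}|, n * d) :=
  \matrix_(a < #|{: 'I_n * 'I_n}|) mxvec (rig_row e P (enum_val a)).

(** r_d(G) evaluated at the framework P (for generic P this is the generic
    rank). *)
Definition rank_at (R : realType) (n d : nat) (e : rel 'I_n)
  (P : framework R n d) : nat := \rank (rigidity_matrix e P).

(** {u,v} non-adjacent is R_d-linked in G: r_d(G+uv) = r_d(G), the rank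
    being computed at a generic framework (independent of the choice). *)
Definition Rd_linked (R : realType) (n d : nat) (e : rel 'I_n) (u v : 'I_n) : Prop :=
  forall P : framework R n d, generic P ->
    rank_at (add_edge e u v) P = rank_at e P.

(* Main.v *)
Require Import Defs.
From HB Require Import structures.
From mathcomp Require Import all_boot all_order all_algebra.
From mathcomp Require Import mpoly.
From mathcomp Require Import reals.
From mathcomp Require classical_sets.
From mathcomp Require Import ring lra zify.
Set Implicit Arguments. Unset Strict Implicit. Unset Printing Implicit Defensive.
Import Order.TTheory GRing.Theory Num.Theory.
Local Open Scope ring_scope.

Section Gen.
Variable (R : comNzRingType) (n d : nat).

Definition rrow (e : rel 'I_n) (P : 'M[R]_(n, d)) (uv : 'I_n * 'I_n) : 'M[R]_(n, d) :=
  if e uv.1 uv.2 then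
    \matrix_(i, k) (((i == uv.1)%:R - (i == uv.2)%:R) * (P uv.1 k - P uv.2 k))
  else 0.

Definition rmat (e : rel 'I_n) (P : 'M[R]_(n, d)) : 'M[R]_(#|{: 'I_n * 'I_n}|, n * d) :=
  \matrix_(a < #|{: 'I_n * 'I_n}|) mxvec (rrow e P (enum_val a)).

Definition flexF (P D : 'M[R]_(n, d)) (u v : 'I_n) : R :=
  \sum_(k < d) (P u k - P v k) * (D u k - D v k).

Lemma mxvec_dot (A B : 'M[R]_(n, d)) :
  (mxvec A *m (mxvec B)^T) 0 0 = \sum_(i < n) \sum_(k < d) A i k * B i k.
Proof.
rewrite mxE (reindex _ (curry_mxvec_bij _ _)) /= pair_bigA /=.
by apply: eq_bigr => -[i k] _ /=; rewrite !mxE !mxvecE.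
Qed.

Lemma rrow_dot e P (D : 'M[R]_(n, d)) u v :
  \sum_(i < n) \sum_(k < d) rrow e P (u, v) i k * D i k =
  if e u v then flexF P D u v else 0.
Proof.
rewrite /rrow /=; case: (e u v); last first.
  by apply: big1 => i _; apply: big1 => k _; rewrite mxE mul0r.
rewrite exchange_big /flexF; apply: eq_bigr => k _ /=.
under eq_bigr do rewrite mxE.
have e1 : forall i : 'I_n, ((i == u)%:R - (i == v)%:R) * (P u k - P v k) * D i k =
   (i == u)%:R * (P u k - P v k) * D i k - (i == v)%:R * (P u k - P v k) * D i k.
  by move=> i; ring.
under eq_bigr do rewrite e1.
rewrite sumrB.
have h (w : 'I_n) (c : R) : \sum_(i < n) (i == w)%:R * c * D i k = c * D w k.
  rewrite (bigD1 w) //= eqxx mul1r big1 ?addr0 // => i /negPf ->.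
  by rewrite mul0r mul0r.
rewrite !h; ring.
Qed.

Lemma rmat_mulE e P (D : 'M[R]_(n, d)) a :
  (rmat e P *m (mxvec D)^T) a 0 =
  if e (enum_val a).1 (enum_val a).2 then flexF P D (enum_val a).1 (enum_val a).2 else 0.
Proof.
have -> : (rmat e P *m (mxvec D)^T) a 0 = (mxvec (rrow e P (enum_val a)) *m (mxvec D)^T) 0 0.
  by rewrite !mxE; apply: eq_bigr => j _; rewrite !mxE.
by rewrite mxvec_dot; case: (enum_val a) => u v; rewrite rrow_dot.
Qed.

End Gen.

Section LinAlg.
Variable F : fieldType.

Lemma col_mulmx m N p (A : 'M[F]_(m, N)) (C : 'M[F]_(N, p)) j :
  A *m col j C = col j (A *m C).
Proof. by rewrite !colE mulmxA. Qed.

Lemma sub_flex m1 m2 N (B1 : 'M[F]_(m1, N)) (B2 : 'M[F]_(m2, N)) :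
  (forall c : 'cV_N, B1 *m c = 0 -> B2 *m c = 0) -> (B2 <= B1)%MS.
Proof.
move=> H; rewrite submxE; apply/eqP/matrixP => i j.
have hc := mulmx_coker B1; set C := cokermx B1 in hc *.
have := H (col j C); rewrite !col_mulmx hc.
have -> : col j (0 : 'M[F]_(m1, N)) = 0 by apply/matrixP => a b; rewrite !mxE.
move=> /(_ erefl) /matrixP /(_ i 0).
by rewrite !mxE.
Qed.

Lemma flex_sub m1 m2 N (B1 : 'M[F]_(m1, N)) (B2 : 'M[F]_(m2, N)) (c : 'cV_N) :
  (B2 <= B1)%MS -> B1 *m c = 0 -> B2 *m c = 0.
Proof. by case/submxP => X -> h; rewrite -mulmxA h mulmx0. Qed.

Definition minor m N s (A : 'M[F]_(m, N)) (f : 'I_s -> 'I_m) (g : 'I_s -> 'I_N) : 'M[F]_s :=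
  \matrix_(i, j) A (f i) (g j).

Lemma minor_rank m N s (A : 'M[F]_(m, N)) (f : 'I_s -> 'I_m) (g : 'I_s -> 'I_N) :
  \det (minor A f g) != 0 -> (s <= \rank A)%N.
Proof.
move=> h.
have E : minor A f g = rowsub f 1%:M *m A *m colsub g 1%:M.
  by rewrite mulmx_colsub mulmx1 -rowsubE; apply/matrixP => i j; rewrite !mxE.
have u : minor A f g \in unitmx by rewrite unitmxE unitfE.
rewrite -(mxrank_unit u) E.
exact: leq_trans (mxrankM_maxl _ _) (mxrankM_maxr _ _).
Qed.

Lemma rank_minor m N (A : 'M[F]_(m, N)) :
  exists f : 'I_(\rank A) -> 'I_m, exists g : 'I_(\rank A) -> 'I_N,
    \det (minor A f g) != 0.
Proof.
set A1 := rowsub (maxrankfun A) A.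
have fr : row_full A1^T.
  by rewrite /row_full mxrank_tr; apply: maxrowsub_free.
exists (maxrankfun A), (fullrankfun fr).
have u := fullrowsub_unit fr.
have -> : minor A (maxrankfun A) (fullrankfun fr) = (rowsub (fullrankfun fr) A1^T)^T.
  by apply/matrixP => i j; rewrite !mxE.
by rewrite det_tr -unitfE -unitmxE.
Qed.

Lemma gram_rank (K : realFieldType) m N (B : 'M[K]_(m, N)) :
  \rank (B *m B^T) = \rank B.
Proof.
apply/eqP; rewrite eqn_leq mxrankM_maxl /=.
set X := kermx (B *m B^T).
have XB : X *m B = 0.
  have h0 : X *m (B *m B^T) = 0 by apply/sub_kermxP.
  have h1 : (X *m B) *m (X *m B)^T = 0 by rewrite trmx_mul mulmxA -(mulmxA X) h0 mul0mx.
  move: h1; set Y := X *m B => h1.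
  apply/matrixP => i j; rewrite [RHS]mxE.
  have := congr1 (fun M : 'M[K]_m => M i i) h1; rewrite /= mxE [RHS]mxE => hs.
  have hs' : \sum_(k < N) Y i k * Y i k = 0.
    by rewrite -[in RHS]hs; apply: eq_bigr => k _; rewrite [Y^T _ _]mxE.
  have := @psumr_eq0P _ _ predT (fun k => Y i k * Y i k)
     (fun k _ => sqr_ge0 (Y i k)) hs' j erefl.
  by move/eqP; rewrite mulf_eq0 orbb => /eqP.
have : (X <= kermx B)%MS by apply/sub_kermxP.
move/mxrankS; rewrite !mxrank_ker.
have := rank_leq_row B; have := rank_leq_row (B *m B^T).
move=> h1 h2 h3; apply: contraLR h3; rewrite -!ltnNge => h4.
rewrite ltn_sub2l //; exact: leq_trans h4 h2.
Qed.

End LinAlg.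

Definition Kc (n : nat) : rel 'I_n := fun _ _ => true.

Lemma rigidity_rmat (R : realType) n d (e : rel 'I_n) (P : 'M[R]_(n, d)) :
  rigidity_matrix e P = rmat e P.
Proof. by []. Qed.

Section RM.
Variable (F : fieldType) (n d : nat).

Lemma rmat_sub (e1 e2 : rel 'I_n) (P : 'M[F]_(n, d)) :
  (forall u v, e1 u v -> e2 u v) -> (rmat e1 P <= rmat e2 P)%MS.
Proof.
move=> h; apply/row_subP => a; rewrite rowK.
have := row_sub a (rmat e2 P); rewrite rowK /rrow.
case E1: (e1 _ _); last by rewrite linear0 sub0mx.
by rewrite (h _ _ E1).
Qed.

Lemma rmat_scale (e : rel 'I_n) (P : 'M[F]_(n, d)) (c : F) :
  rmat e (c *: P) = c *: rmat e P.
Proof.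
apply/matrixP => a j; rewrite !mxE.
case/mxvec_indexP: j => i k; rewrite !mxvecE /rrow.
by case: (e _ _); rewrite !mxE ?mulr0 //; ring.
Qed.

Lemma rmat_map (K : comNzRingType) (f : {rmorphism F -> K}) (e : rel 'I_n)
   (P : 'M[F]_(n, d)) : map_mx f (rmat e P) = rmat e (map_mx f P).
Proof.
apply/matrixP => a j; rewrite !mxE.
case/mxvec_indexP: j => i k; rewrite !mxvecE /rrow.
case: (e _ _); last by rewrite !mxE rmorph0.
by rewrite !mxE rmorphM rmorphB !rmorphB !rmorph_nat.
Qed.

End RM.

Section Gram.
Variable (R : realType) (n d : nat).

Definition ip (Q : 'M[R]_(n, d)) u v u' v' :=
  \sum_(k < d) (Q u k - Q v k) * (Q u' k - Q v' k).

Lemma ip_sq (Q : 'M[R]_(n, d)) u v u' v' :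
  ip Q u v u' v' *+ 2 =
  sqdist Q u v' + sqdist Q v u' - sqdist Q u u' - sqdist Q v v'.
Proof.
rewrite /ip /sqdist -sumrMnl -big_split /= -!sumrB.
apply: eq_bigr => k _; ring.
Qed.

Lemma ip_eq (Q P : 'M[R]_(n, d)) :
  (forall a b, sqdist Q a b = sqdist P a b) -> forall u v u' v', ip Q u v u' v' = ip P u v u' v'.
Proof.
move=> h u v u' v'; apply: (@mulIf _ 2%:R); first by rewrite pnatr_eq0.
by rewrite !mulr_natr !ip_sq !h.
Qed.

Lemma gram_entry e (Q : 'M[R]_(n, d)) a b :
  (rmat e Q *m (rmat e Q)^T) a b =
  let: (u, v) := enum_val a in let: (u', v') := enum_val b in
  if e u v && e u' v' then
    ((u == u')%:R - (u == v')%:R - (v == u')%:R + (v == v')%:R) * ip Q u' v' u v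
  else 0.
Proof.
have -> : (rmat e Q *m (rmat e Q)^T) a b =
   (mxvec (rrow e Q (enum_val a)) *m (mxvec (rrow e Q (enum_val b)))^T) 0 0.
  by rewrite !mxE; apply: eq_bigr => j _; rewrite !mxE.
rewrite mxvec_dot; case: (enum_val a) => u v; case: (enum_val b) => u' v'.
rewrite rrow_dot; case: (e u v) => //=.
rewrite /flexF /rrow /=; case: (e u' v') => /=; last first.
  by apply: big1 => k _; rewrite !mxE subrr mulr0.
rewrite /ip mulr_sumr; apply: eq_bigr => k _; rewrite !mxE; ring.
Qed.

Lemma gram_eq e (Q P : 'M[R]_(n, d)) :
  (forall a b, sqdist Q a b = sqdist P a b) ->
  rmat e Q *m (rmat e Q)^T = rmat e P *m (rmat e P)^T.
Proof.
move=> h; apply/matrixP => a b; rewrite !gram_entry.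
case: (enum_val a) => u v; case: (enum_val b) => u' v'.
by rewrite (ip_eq h).
Qed.

Lemma rank_eq_dist e (Q P : 'M[R]_(n, d)) :
  (forall a b, sqdist Q a b = sqdist P a b) ->
  \rank (rmat e Q) = \rank (rmat e P).
Proof. by move=> h; rewrite -gram_rank (gram_eq e h) gram_rank. Qed.

End Gram.

Lemma rmat_mapg (A K : comNzRingType) n d (f : {rmorphism A -> K}) (e : rel 'I_n)
   (P : 'M[A]_(n, d)) : map_mx f (rmat e P) = rmat e (map_mx f P).
Proof.
apply/matrixP => a j; rewrite !mxE.
case/mxvec_indexP: j => i k; rewrite !mxvecE /rrow.
case: (e _ _); last by rewrite !mxE rmorph0.
by rewrite !mxE rmorphM rmorphB !rmorphB !rmorph_nat.
Qed.

Section Generic.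
Variable (R : realType) (n d : nat).
Local Notation PR := {mpoly rat[n * d]}.

Definition ev (M : 'M[R]_(n, d)) : {rmorphism PR -> R} :=
  meval (fun j => mxvec M 0 j) \o map_mpoly (ratr : rat -> R).

Definition Xs : 'M[PR]_(n, d) := \matrix_(i, k) 'X_(mxvec_index i k).

Lemma ev_Xs (M : 'M[R]_(n, d)) : map_mx (ev M) Xs = M.
Proof.
apply/matrixP => i k; rewrite !mxE /ev /=.
by rewrite map_mpolyX mevalXU mxvecE.
Qed.

Lemma ev_det (M : 'M[R]_(n, d)) s (A : 'M[PR]_s) :
  \det (map_mx (ev M) A) = ev M (\det A).
Proof. by rewrite det_map_mx. Qed.

Lemma generic_rank (P M : 'M[R]_(n, d)) m N (Bs : 'M[PR]_(m, N)) :
  generic P -> (\rank (map_mx (ev M) Bs) <= \rank (map_mx (ev P) Bs))%N.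
Proof.
move=> gP.
have [f [g hfg]] := rank_minor (map_mx (ev M) Bs).
set q := \det (\matrix_(i, j) Bs (f i) (g j)).
have eM : forall M', minor (map_mx (ev M') Bs) f g = map_mx (ev M') (\matrix_(i, j) Bs (f i) (g j)).
  by move=> M'; apply/matrixP => i j; rewrite !mxE.
move: hfg; rewrite eM ev_det -/q => hq.
apply: (minor_rank (f := f) (g := g)); rewrite eM ev_det -/q.
have q0 : q != 0 by apply: contraNneq hq => ->; rewrite rmorph0.
exact: gP q q0.
Qed.

Lemma rmat_ev e (M : 'M[R]_(n, d)) : rmat e M = map_mx (ev M) (rmat e Xs).
Proof. by rewrite rmat_mapg ev_Xs. Qed.

Lemma generic_rank_rmat e (P M : 'M[R]_(n, d)) :
  generic P -> (\rank (rmat e M) <= \rank (rmat e P))%N.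
Proof. by move=> gP; rewrite (rmat_ev e M) (rmat_ev e P); apply: generic_rank. Qed.

End Generic.

Section Aff.
Variable (R : realType) (n d : nat).

Definition Dmx (P : 'M[R]_(n, d)) (c : 'I_d -> 'I_n) (z : 'I_n) : 'M[R]_d :=
  \matrix_(i, k) (P (c i) k - P z k).

Lemma gen_unit (P : 'M[R]_(n, d)) (c : 'I_d -> 'I_n) (z : 'I_n) :
  generic P -> injective c -> (forall i, c i != z) -> Dmx P c z \in unitmx.
Proof.
move=> gP ic cz.
pose Ds : 'M[{mpoly rat[n * d]}]_d := \matrix_(i, k) (Xs n d (c i) k - Xs n d z k).
have eX : forall M : 'M[R]_(n, d), forall a k, ev M 'X_(mxvec_index a k) = M a k.
  by move=> M a k; rewrite /ev /= map_mpolyX mevalXU mxvecE.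
have eD : forall M, map_mx (ev M) Ds = Dmx M c z.
  by move=> M; apply/matrixP => i k; rewrite !mxE rmorphB !eX.
pose M0 : 'M[R]_(n, d) := \matrix_(v, k) ([exists i, (c i == v) && (i == k)])%:R.
have hM0 : Dmx M0 c z = 1%:M.
  apply/matrixP => i k; rewrite !mxE.
  have -> : [exists i0, (c i0 == c i) && (i0 == k)] = (i == k).
    apply/existsP/idP => [[i0 /andP[/eqP /ic -> //]]|/eqP ->].
    by exists k; rewrite !eqxx.
  have -> : [exists i0, (c i0 == z) && (i0 == k)] = false.
    by apply/existsP => -[i0 /andP[/eqP h _]]; move: (cz i0); rewrite h eqxx.
  by rewrite subr0.
have := generic_rank M0 Ds gP; rewrite !eD hM0 mxrank1 => h.
by rewrite -row_free_unit /row_free eqn_leq rank_leq_row h.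
Qed.

Lemma flex_triangle (P D : 'M[R]_(n, d)) (c : 'I_d -> 'I_n) (x y : 'I_n) :
  Dmx P c x \in unitmx -> Dmx P c y \in unitmx ->
  (forall i, flexF P D x (c i) = 0) -> (forall i, flexF P D y (c i) = 0) ->
  (forall i j, flexF P D (c i) (c j) = 0) -> flexF P D x y = 0.
Proof.
move=> Ux Uy hx hy hc.
pose u i k := P (c i) k - P x k.
pose w k := P y k - P x k.
pose dl i k := D (c i) k - D x k.
pose eta k := D y k - D x k.
pose wr : 'rV[R]_d := \row_k w k.
pose al := wr *m invmx (Dmx P c x).
have hal : forall k, \sum_i al 0 i * u i k = w k.
  move=> k; have : al *m Dmx P c x = wr by rewrite mulmxKV.
  by move/matrixP/(_ 0 k); rewrite !mxE => <-; apply: eq_bigr => i _; rewrite [Dmx _ _ _ _ _]mxE.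
have Sii : forall i, \sum_k u i k * dl i k = 0.
  move=> i; rewrite -[RHS](hx i) /flexF; apply: eq_bigr => k _; rewrite /u /dl; ring.
have Sij : forall i j, \sum_k u i k * dl j k + \sum_k u j k * dl i k = 0.
  move=> i j; have := hc i j; rewrite /flexF.
  have e1 : forall k, (P (c i) k - P (c j) k) * (D (c i) k - D (c j) k) =
     u i k * dl i k + u j k * dl j k - (u i k * dl j k + u j k * dl i k).
    by move=> k; rewrite /u /dl; ring.
  under eq_bigr do rewrite e1.
  rewrite sumrB !big_split /= Sii Sii add0r sub0r => /eqP; rewrite oppr_eq0 => /eqP.
  by [].
have Sy : forall i, \sum_k u i k * eta k = \sum_k w k * eta k - \sum_k w k * dl i k.
  move=> i; apply/eqP; rewrite -subr_eq0; apply/eqP.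
  have := hy i; rewrite /flexF => h.
  have e1 : forall k, (P y k - P (c i) k) * (D y k - D (c i) k) =
     w k * eta k - w k * dl i k - u i k * eta k + u i k * dl i k.
    by move=> k; rewrite /u /w /dl /eta; ring.
  move: h; under eq_bigr do rewrite e1.
  rewrite !big_split /= !sumrN Sii addr0 => h.
  transitivity (- (\sum_k w k * eta k - \sum_k w k * dl i k - \sum_k u i k * eta k)); first ring.
  by rewrite h oppr0.
set we := \sum_k w k * eta k.
have goal : flexF P D x y = we by rewrite /flexF /we; apply: eq_bigr => k _; rewrite /w /eta; ring.
rewrite goal.
set sa := \sum_i al 0 i.
have T0 : \sum_i \sum_j al 0 i * al 0 j * \sum_k u j k * dl i k = 0.
  set T := \sum_i \sum_j _.
  have : T + T = 0.
    rewrite {2}/T exchange_big /T -big_split /=; apply: big1 => i _.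
    rewrite -big_split /=; apply: big1 => j _.
    by rewrite [al 0 j * _]mulrC -mulrDr addrC Sij mulr0.
  by move/eqP; rewrite -mulr2n mulrn_eq0 /= => /eqP.
have St1 : we = \sum_i al 0 i * \sum_k u i k * eta k.
  rewrite /we; transitivity (\sum_k \sum_i al 0 i * u i k * eta k).
    by apply: eq_bigr => k _; rewrite -hal mulr_suml.
  rewrite exchange_big; apply: eq_bigr => i _; rewrite mulr_sumr.
  by apply: eq_bigr => k _; rewrite mulrA.
have St2 : \sum_i al 0 i * \sum_k u i k * eta k =
    sa * we - \sum_i al 0 i * \sum_k w k * dl i k.
  transitivity (\sum_i (al 0 i * we - al 0 i * \sum_k w k * dl i k)).
    by apply: eq_bigr => i _; rewrite Sy mulrBr.
  by rewrite sumrB /sa mulr_suml.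
have St3 : \sum_i al 0 i * \sum_k w k * dl i k =
    \sum_i \sum_j al 0 i * al 0 j * \sum_k u j k * dl i k.
  apply: eq_bigr => i _.
  transitivity (al 0 i * \sum_k \sum_j al 0 j * u j k * dl i k).
    by congr (_ * _); apply: eq_bigr => k _; rewrite -hal mulr_suml.
  rewrite exchange_big mulr_sumr; apply: eq_bigr => j _; rewrite !mulr_sumr.
  by apply: eq_bigr => k _; ring.
have E1 : we = sa * we - \sum_i \sum_j al 0 i * al 0 j * \sum_k u j k * dl i k.
  by rewrite -St3 -St2 -St1.
move: E1; rewrite T0 subr0 => E1.
have : we * (1 - sa) = 0 by rewrite mulrBr mulr1 mulrC -E1 subrr.
move/eqP; rewrite mulf_eq0 => /orP[/eqP //|].
rewrite subr_eq0 => /eqP sa1.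
have : al *m Dmx P c y = 0.
  apply/matrixP => z k; rewrite [LHS]mxE [RHS]mxE (ord1 z).
  have e1 : forall i, al 0 i * Dmx P c y i k = al 0 i * u i k - al 0 i * w k.
    by move=> i; rewrite [Dmx _ _ _ _ _]mxE /u /w; ring.
  under eq_bigr do rewrite e1.
  by rewrite sumrB hal -mulr_suml -/sa -sa1 mul1r subrr.
move=> h0; have : al = 0 by rewrite -(mulmxK Uy al) h0 mul0mx.
move=> al0; move: sa1; rewrite /sa al0.
under eq_bigr do rewrite mxE.
by rewrite big1 // => /eqP; rewrite oner_eq0.
Qed.

End Aff.

Section StepA.
Variable (R : realType) (n d : nat).

Lemma flexF_sym (P D : 'M[R]_(n, d)) a b : flexF P D a b = flexF P D b a.
Proof. by apply: eq_bigr => k _; ring. Qed.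

Lemma flexF_refl (P D : 'M[R]_(n, d)) a : flexF P D a a = 0.
Proof. by apply: big1 => k _; rewrite subrr mul0r. Qed.

Lemma rmat_flex0 (e : rel 'I_n) (P D : 'M[R]_(n, d)) :
  (forall u v, e u v -> flexF P D u v = 0) -> rmat e P *m (mxvec D)^T = 0.
Proof.
move=> h; apply/matrixP => a z; rewrite (ord1 z) rmat_mulE [RHS]mxE.
by case E: (e _ _) => //; rewrite h.
Qed.

Lemma rmat_flex1 (e : rel 'I_n) (P D : 'M[R]_(n, d)) u v :
  rmat e P *m (mxvec D)^T = 0 -> e u v -> flexF P D u v = 0.
Proof.
move=> /matrixP /(_ (enum_rank (u, v)) 0); rewrite rmat_mulE enum_rankK /= [RHS]mxE.
by move=> h E; move: h; rewrite E.
Qed.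

Lemma linked_flex (e : rel 'I_n) (P D : 'M[R]_(n, d)) u v :
  Rd_linked R d e u v -> generic P ->
  (forall a b, e a b -> flexF P D a b = 0) -> flexF P D u v = 0.
Proof.
move=> hl gP hD; have := hl P gP; rewrite /rank_at !rigidity_rmat => hr.
have sub : (rmat e P <= rmat (add_edge e u v) P)%MS.
  by apply: rmat_sub => a b h; rewrite /add_edge h.
have sub2 : (rmat (add_edge e u v) P <= rmat e P)%MS.
  by have := mxrank_leqif_sup sub; rewrite hr => -[_ <-].
apply: (@rmat_flex1 (add_edge e u v)); last by rewrite /add_edge !eqxx /= orbT.
exact: flex_sub sub2 (rmat_flex0 hD).
Qed.

End StepA.

Lemma common_nbrs n d (e : rel 'I_n) (x w : 'I_n) :
  simple_graph e ->
  (forall u v : 'I_n, u != v -> ~~ e u v -> n + d - 2 <= deg e u + deg e v)%N ->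
  x != w -> ~~ e w x -> (d <= #|nbhd e x :&: nbhd e w|)%N.
Proof.
move=> [sy ir] hd xw nwx.
have nxw : ~~ e x w by rewrite sy.
have := hd x w xw nxw; rewrite /deg -/(nbhd e x) -/(nbhd e w) => h.
have U : (#|nbhd e x :|: nbhd e w| <= n - 2)%N.
  have -> : (n - 2 = #|~: [set x; w]|)%N.
    by have := cardsC [set x; w]; rewrite cards2 xw card_ord; lia.
  apply: subset_leq_card; apply/subsetP => v; rewrite /nbhd !inE => hv.
  apply/negP => /orP[/eqP ev|/eqP ev]; subst v.
    by move: hv; rewrite ir /= (negPf nwx).
  by move: hv; rewrite ir orbF (negPf nxw).
have /orP[xw2|xw2] : (x < w)%N || (w < x)%N by rewrite -neq_ltn.
all: have := ltn_ord x; have := ltn_ord w.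
all: have := cardsUI (nbhd e x) (nbhd e w); move: h U; set a := #|nbhd e x|; set b := #|nbhd e w|; set c := #|_ :|: _|; set c2 := #|_ :&: _|; clear -xw2; lia.
Qed.

Lemma pick_d n d (C : {set 'I_n}) (x0 : 'I_n) : (d <= #|C|)%N ->
  exists c : 'I_d -> 'I_n, injective c /\ forall i, c i \in C.
Proof.
move=> hd; exists (fun i => nth x0 (enum C) i); split.
  move=> i j /eqP; rewrite nth_uniq ?enum_uniq // -?cardE;
    try exact: leq_trans (ltn_ord _) hd.
  by move/eqP/val_inj.
by move=> i; rewrite -mem_enum mem_nth // -cardE; exact: leq_trans (ltn_ord _) hd.
Qed.

Lemma stepA (R : realType) (n d : nat) (e : rel 'I_n) (P D : 'M[R]_(n, d)) (w : 'I_n) :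
  simple_graph e ->
  (forall u v : 'I_n, u != v -> ~~ e u v -> n + d - 2 <= deg e u + deg e v)%N ->
  (forall u v : 'I_n,
      u \in nbhd e w -> v \in nbhd e w -> u != v -> ~~ e u v ->
      Rd_linked R d e u v) ->
  generic P ->
  (forall u v, e u v -> flexF P D u v = 0) -> forall a b, flexF P D a b = 0.
Proof.
move=> sg hdeg hlink gP hD.
have [sy ir] := sg.
pose ins a := (a == w) || (a \in nbhd e w).
have inN : forall a, (a \in nbhd e w) = e w a by move=> a; rewrite inE.
have C1 : forall a b, ins a -> ins b -> flexF P D a b = 0.
  move=> a b ha hb.
  have [->|ab] := eqVneq a b; first exact: flexF_refl.
  case E: (e a b); first exact: hD.
  move: ha hb; rewrite /ins.
  case/orP=> [/eqP ea|ha].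
    subst a; case/orP=> [/eqP eb|hb]; first by rewrite eb eqxx in ab.
    by apply: hD; rewrite -inN.
  case/orP=> [/eqP eb|hb].
    by subst b; rewrite flexF_sym; apply: hD; rewrite -inN.
  apply: linked_flex; [by apply: hlink => //; rewrite E | exact: gP | exact: hD].
have getc : forall a, ~~ ins a -> exists c : 'I_d -> 'I_n,
    injective c /\ forall i, e a (c i) && e w (c i).
  move=> a; rewrite /ins negb_or inN => /andP[aw nwa].
  have := common_nbrs sg hdeg aw nwa => hc.
  have [c [ic hci]] := pick_d a hc.
  exists c; split => // i; have := hci i; by rewrite inE !inE.
have tri : forall a b (c : 'I_d -> 'I_n), injective c ->
    (forall i, e a (c i) && e w (c i)) -> ~~ e a b -> a != b ->
    (forall i, c i != b) ->
    (forall i, flexF P D b (c i) = 0) -> flexF P D a b = 0.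
  move=> a b c ic hci nab ab cb hb.
  apply: (@flex_triangle R n d P D c a b).
  - apply: gen_unit => // i; apply/eqP => h.
    by have := hci i; rewrite h ir.
  - by apply: gen_unit.
  - by move=> i; apply: hD; have /andP[] := hci i.
  - exact: hb.
  - move=> i j; apply: C1; rewrite /ins inN.
      by have /andP[_ ->] := hci i; rewrite orbT.
    by have /andP[_ ->] := hci j; rewrite orbT.
have C2 : forall a b, ~~ ins a -> ins b -> flexF P D a b = 0.
  move=> a b na hb.
  case E: (e a b); first exact: hD.
  have [c [ic hci]] := getc a na.
  have ab : a != b by apply: contraNneq na => ->.
  apply: (tri a b c) => //; first by rewrite E.
    move=> i; apply/eqP => h; have := hci i; by rewrite h E.
  move=> i; apply: C1 => //; rewrite /ins inN.
  by have /andP[_ ->] := hci i; rewrite orbT.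
have C3 : forall a b, ~~ ins a -> ~~ ins b -> flexF P D a b = 0.
  move=> a b na nb.
  have [->|ab] := eqVneq a b; first exact: flexF_refl.
  case E: (e a b); first exact: hD.
  have [c [ic hci]] := getc a na.
  apply: (tri a b c) => //; first by rewrite E.
    move=> i; apply/eqP => h; move: nb; rewrite /ins inN -h.
    by have /andP[_ ->] := hci i; rewrite orbT.
  move=> i; apply: C2 => //; rewrite /ins inN.
  by have /andP[_ ->] := hci i; rewrite orbT.
move=> a b.
case ha: (ins a); case hb: (ins b).
- exact: C1.
- by rewrite flexF_sym; apply: C2 => //; rewrite hb.
- by apply: C2 => //; rewrite ha.
- by apply: C3; rewrite ?ha ?hb.
Qed.

Section Cont.
Variable R : realType.

Definition cont (g : R -> R) (t0 : R) : Prop :=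
  forall eps : R, 0 < eps -> exists2 dl : R, 0 < dl &
    forall t, in01 t -> `|t - t0| < dl -> `|g t - g t0| < eps.

Lemma cont_ext f g t0 : (forall t, f t = g t) -> cont f t0 -> cont g t0.
Proof.
move=> e cf eps he; have [dl hd h] := cf eps he; exists dl => // t ht htd.
by rewrite -!e; apply: h.
Qed.

Lemma cont_cst c t0 : cont (fun _ => c) t0.
Proof. by move=> eps he; exists 1 => // t _ _; rewrite subrr normr0. Qed.

Lemma cont_add f g t0 : cont f t0 -> cont g t0 -> cont (fun t => f t + g t) t0.
Proof.
move=> cf cg eps he.
have he2 : 0 < eps / 2 by rewrite divr_gt0.
have [d1 hd1 h1] := cf _ he2; have [d2 hd2 h2] := cg _ he2.
exists (Num.min d1 d2); first by rewrite lt_min hd1 hd2.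
move=> t ht; rewrite lt_min => /andP[t1 t2].
have := h1 t ht t1; have := h2 t ht t2.
have -> : f t + g t - (f t0 + g t0) = (f t - f t0) + (g t - g t0) by ring.
move=> a b; apply: le_lt_trans (ler_normD _ _) _.
have -> : eps = eps / 2 + eps / 2 by field.
exact: ltrD.
Qed.

Lemma cont_opp f t0 : cont f t0 -> cont (fun t => - f t) t0.
Proof.
move=> cf eps he; have [dl hd h] := cf eps he; exists dl => // t ht htd.
by rewrite -opprD normrN; apply: h.
Qed.

Lemma cont_sub f g t0 : cont f t0 -> cont g t0 -> cont (fun t => f t - g t) t0.
Proof. by move=> cf cg; apply: cont_add => //; apply: cont_opp. Qed.

Lemma cont_mul f g t0 : cont f t0 -> cont g t0 -> cont (fun t => f t * g t) t0.
Proof.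
move=> cf cg eps he.
set A := `|f t0| + 1; set B := `|g t0| + 1.
have A0 : 0 < A by rewrite /A ltr_pwDr.
have B0 : 0 < B by rewrite /B ltr_pwDr.
have e1 : 0 < eps / (2 * B) by rewrite divr_gt0 // mulr_gt0.
have e2 : 0 < Num.min 1 (eps / (2 * A)) by rewrite lt_min ltr01 divr_gt0 // mulr_gt0.
have [d1 hd1 h1] := cf _ e1; have [d2 hd2 h2] := cg _ e2.
exists (Num.min d1 d2); first by rewrite lt_min hd1 hd2.
move=> t ht; rewrite lt_min => /andP[t1 t2].
have a := h1 t ht t1; have := h2 t ht t2; rewrite lt_min => /andP[b1 b2].
have -> : f t * g t - f t0 * g t0 = (f t - f t0) * g t + f t0 * (g t - g t0) by ring.
apply: le_lt_trans (ler_normD _ _) _; rewrite !normrM.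
have gB : `|g t| <= B.
  have -> : g t = (g t - g t0) + g t0 by ring.
  apply: le_trans (ler_normD _ _) _; rewrite /B addrC lerD2l; exact: ltW.
have fA : `|f t0| <= A by rewrite /A lerDl.
have x1 : `|f t - f t0| * `|g t| < eps / 2.
  apply: le_lt_trans (_ : `|f t - f t0| * B < _).
    by apply: ler_wpM2l => //.
  have -> : eps / 2 = eps / (2 * B) * B by field; rewrite gt_eqF.
  by rewrite ltr_pM2r.
have x2 : `|f t0| * `|g t - g t0| <= eps / 2.
  apply: le_trans (_ : A * `|g t - g t0| <= _).
    by apply: ler_wpM2r.
  have -> : eps / 2 = A * (eps / (2 * A)) by field; rewrite gt_eqF.
  by rewrite ler_pM2l // ltW.
have -> : eps = eps / 2 + eps / 2 by field.
exact: ltr_leD.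
Qed.

Lemma cont_sum (I : Type) (s : seq I) (F : I -> R -> R) t0 :
  (forall i, cont (F i) t0) -> cont (fun t => \sum_(i <- s) F i t) t0.
Proof.
move=> h; elim: s => [|i s IH].
  by apply: (cont_ext (f := fun _ => 0)) => [t|]; [rewrite big_nil|apply: cont_cst].
apply: (cont_ext (f := fun t => F i t + \sum_(j <- s) F j t)).
  by move=> t; rewrite big_cons.
exact: cont_add.
Qed.

Lemma cont_prod (I : Type) (s : seq I) (F : I -> R -> R) t0 :
  (forall i, cont (F i) t0) -> cont (fun t => \prod_(i <- s) F i t) t0.
Proof.
move=> h; elim: s => [|i s IH].
  by apply: (cont_ext (f := fun _ => 1)) => [t|]; [rewrite big_nil|apply: cont_cst].
apply: (cont_ext (f := fun t => F i t * \prod_(j <- s) F j t)).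
  by move=> t; rewrite big_cons.
exact: cont_mul.
Qed.

Lemma cont_exp f k t0 : cont f t0 -> cont (fun t => f t ^+ k) t0.
Proof.
move=> cf; elim: k => [|k IH].
  by apply: (cont_ext (f := fun _ => 1)) => [t|]; [rewrite expr0|apply: cont_cst].
apply: (cont_ext (f := fun t => f t * f t ^+ k)).
  by move=> t; rewrite exprS.
exact: cont_mul.
Qed.

Lemma cont_ev n d (g : R -> 'M[R]_(n, d)) t0 (q : {mpoly rat[n * d]}) :
  (forall i k, cont (fun t => g t i k) t0) -> cont (fun t => ev (g t) q) t0.
Proof.
move=> hg.
have hv : forall j, cont (fun t => mxvec (g t) 0 j) t0.
  move=> j; case/mxvec_indexP: j => i k.
  by apply: (cont_ext (f := fun t => g t i k)) => // t; rewrite mxvecE.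
apply: (cont_ext (f := fun t => \sum_(m <- msupp (map_mpoly (ratr : rat -> R) q))
    (map_mpoly (ratr : rat -> R) q)@_m * \prod_i mxvec (g t) 0 i ^+ m i)).
  by move=> t; rewrite /ev /= mevalE.
apply: cont_sum => m; apply: cont_mul; first exact: cont_cst.
by apply: cont_prod => i; apply: cont_exp.
Qed.

Lemma cont_nz g t0 : cont g t0 -> g t0 != 0 ->
  exists2 dl : R, 0 < dl & forall t, in01 t -> `|t - t0| < dl -> g t != 0.
Proof.
move=> cg nz; have n0 : 0 < `|g t0| by rewrite normr_gt0.
have [dl hd h] := cg `|g t0| n0.
exists dl => // t ht htd; apply/eqP => gt0.
by move: (h t ht htd); rewrite gt0 sub0r normrN ltxx.
Qed.

End Cont.

Section Local.
Variable (R : realType) (n d : nat).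

Lemma flex_sqdist (A B : 'M[R]_(n, d)) u v :
  flexF (A + B) (B - A) u v = sqdist B u v - sqdist A u v.
Proof.
rewrite /flexF /sqdist -sumrB; apply: eq_bigr => k _; rewrite !mxE; ring.
Qed.

Lemma local_open (e : rel 'I_n) (P : 'M[R]_(n, d)) (f : R -> 'M[R]_(n, d)) t0 :
  generic P -> (rmat (@Kc n) P <= rmat e P)%MS ->
  continuous_on01 f ->
  (forall t, in01 t -> forall u v, e u v -> sqdist (f t) u v = sqdist P u v) ->
  in01 t0 -> (forall a b, sqdist (f t0) a b = sqdist P a b) ->
  exists2 dl : R, 0 < dl & forall t, in01 t -> `|t - t0| < dl ->
    forall a b, sqdist (f t) a b = sqdist P a b.
Proof.
move=> gP HA cf hE ht0 hT0.
pose M t := f t0 + f t.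
have r1 : (\rank (rmat (@Kc n) P) <= \rank (rmat e (M t0)))%N.
  have -> : M t0 = 2%:R *: f t0 by rewrite /M scaler_nat mulr2n.
  rewrite rmat_scale mxrank_scale_nz ?pnatr_eq0 // (rank_eq_dist e hT0).
  exact: mxrankS.
have [f1 [g1 hm]] := rank_minor (rmat e (M t0)).
pose q := \det (\matrix_(i, j) (rmat e (Xs n d)) (f1 i) (g1 j)).
have hq : forall t, \det (minor (rmat e (M t)) f1 g1) = ev (M t) q.
  move=> t; rewrite /q -ev_det; congr (\det _); apply/matrixP => i j.
  by rewrite (rmat_ev e (M t)) !mxE.
have cq : cont (fun t => ev (M t) q) t0.
  apply: cont_ev => i k.
  apply: (cont_ext (f := fun t => f t0 i k + f t i k)); first by move=> t; rewrite mxE.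
  apply: cont_add; first exact: cont_cst.
  move=> eps he; have [dl hd h] := cf t0 ht0 eps he.
  by exists dl => // t ht htd; apply: h.
have hq0 : ev (M t0) q != 0 by rewrite -hq.
have [dl hd hnz] := cont_nz cq hq0.
exists dl => // t ht htd a b.
have rs : (\rank (rmat e (M t0)) <= \rank (rmat e (M t)))%N.
  by apply: (@minor_rank _ _ _ _ _ f1 g1); rewrite hq; apply: hnz.
have rk : (\rank (rmat (@Kc n) (M t)) <= \rank (rmat (@Kc n) P))%N.
  exact: generic_rank_rmat.
have sub : (rmat e (M t) <= rmat (@Kc n) (M t))%MS by apply: rmat_sub.
have sub2 : (rmat (@Kc n) (M t) <= rmat e (M t))%MS.
  have := mxrank_leqif_sup sub => -[_ <-].
  apply/eqP; apply/anti_leq; rewrite mxrankS //=.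
  exact: leq_trans rk (leq_trans r1 rs).
have h0 : rmat e (M t) *m (mxvec (f t - f t0))^T = 0.
  apply: rmat_flex0 => u v euv.
  by rewrite /M flex_sqdist hE // hE // subrr.
have := rmat_flex1 (flex_sub sub2 h0) (u := a) (v := b) erefl.
by rewrite /M flex_sqdist => /eqP; rewrite subr_eq0 hT0 => /eqP.
Qed.

End Local.

Section Global.
Variable (R : realType) (n d : nat).

Lemma cont_sqdist (f : R -> 'M[R]_(n, d)) s a b :
  continuous_on01 f -> in01 s -> cont (fun t => sqdist (f t) a b) s.
Proof.
move=> cf hs.
have ce : forall i k, cont (fun t => f t i k) s.
  move=> i k eps he; have [dl hd h] := cf s hs eps he.
  by exists dl => // t ht htd; apply: h.
apply: cont_sum => k; apply: cont_exp; apply: cont_sub; exact: ce.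
Qed.

Lemma small0 (x : R) : (forall eps, 0 < eps -> `|x| < eps) -> x = 0.
Proof.
move=> h; apply/eqP; apply: contraT => nz.
by have := h `|x|; rewrite normr_gt0 nz ltxx => /(_ isT).
Qed.

Lemma global_T (e : rel 'I_n) (P : 'M[R]_(n, d)) (f : R -> 'M[R]_(n, d)) :
  generic P -> (rmat (@Kc n) P <= rmat e P)%MS ->
  continuous_on01 f -> f 0 = P ->
  (forall t, in01 t -> forall u v, e u v -> sqdist (f t) u v = sqdist P u v) ->
  forall t, in01 t -> forall a b, sqdist (f t) a b = sqdist P a b.
Proof.
move=> gP HA cf f0 hE.
pose T t := forall a b, sqdist (f t) a b = sqdist P a b.
have T0 : T 0 by rewrite /T f0.
pose S : R -> Prop := fun t => in01 t /\ (forall t', 0 <= t' -> t' <= t -> T t').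
have S0 : S 0.
  split; first by rewrite /in01 lexx ler01.
  by move=> t' h1 h2; have -> : t' = 0 by apply/eqP; rewrite eq_le h1 h2.
have hs : classical_sets.has_sup S.
  split; first by exists 0.
  by exists 1 => t [/andP[_ ->]].
set s := sup S.
have ub : forall t, S t -> t <= s by move=> t St; apply: sup_upper_bound.
have s0 : 0 <= s by exact: ub _ S0.
have s1 : s <= 1 by apply: ge_sup; [exists 0|move=> t [/andP[_ ->]]].
have ins : in01 s by rewrite /in01 s0 s1.
have CA : forall t', 0 <= t' -> t' < s -> T t'.
  move=> t' h0 h1; have hp : 0 < s - t' by rewrite subr_gt0.
  have [x [_ Sx] hx] := sup_adherent hp hs.
  by apply: Sx => //; apply: ltW; move: hx; rewrite -/s opprB addrCA subrr addr0.
have CB : T s.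
  have [s_eq0|s_gt0] := eqVneq s 0; first by rewrite s_eq0.
  have sp : 0 < s by rewrite lt_def s_gt0 s0.
  move=> a b; apply/eqP; rewrite -subr_eq0; apply/eqP; apply: small0 => eps he.
  have [dl hd h] := cont_sqdist a b cf ins he.
  pose t' := Num.max 0 (s - dl / 2).
  have hdl2 : 0 < dl / 2 by rewrite divr_gt0.
  have t'0 : 0 <= t' by rewrite le_max lexx.
  have t's : t' < s by rewrite gt_max sp /= ltrBlDr ltrDl.
  have ht' : in01 t' by rewrite /in01 t'0 /= (le_trans (ltW t's) s1).
  have htd : `|t' - s| < dl.
    rewrite distrC ger0_norm ?subr_ge0 ?(ltW t's) //.
    rewrite ltrBlDr -ltrBlDl; apply: lt_le_trans (_ : s - dl / 2 <= t'); last by rewrite le_max lexx orbT.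
    by rewrite ltrD2l ltrN2 ltr_pdivrMr // ltr_pMr // ltr1n.
  have := h t' ht' htd; rewrite (CA t' t'0 t's a b) distrC.
  by [].
move=> t ht; have [ts|st] := lerP t s.
  have [->|tl] := eqVneq t s; first exact: CB.
  by apply: CA; [case/andP: ht|rewrite lt_neqAle tl ts].
have [dl hd hl] := local_open gP HA cf hE ins CB.
pose ts := Num.min 1 (s + dl / 2).
have hdl2 : 0 < dl / 2 by rewrite divr_gt0.
have sts : s < ts by rewrite lt_min (lt_le_trans st) ?(andP ht).2 //= ltrDl.
have Sts : S ts.
  have ts1 : ts <= 1 by rewrite /ts ge_min lexx.
  have ts0 : 0 <= ts by apply: le_trans s0 (ltW sts).
  split; first by rewrite /in01 ts0 ts1.
  move=> t' h0 h1; have [t's|st'] := lerP t' s.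
    have [->|tl] := eqVneq t' s; first exact: CB.
    by apply: CA => //; rewrite lt_neqAle tl t's.
  apply: hl.
    by rewrite /in01 h0 (le_trans h1).
  rewrite ger0_norm ?subr_ge0 ?ltW //.
  rewrite ltrBlDl; apply: le_lt_trans h1 _.
  apply: le_lt_trans (_ : ts <= s + dl / 2) _; first by rewrite /ts ge_min lexx orbT.
  by rewrite ltrD2l ltr_pdivrMr // ltr_pMr // ltr1n.
by have := ub _ Sts; rewrite leNgt sts.
Qed.

End Global.


Local Close Scope ring_scope.

Theorem lemma4p1 (R : realType) (n d : nat) (e : rel 'I_n) :
  simple_graph e ->
  (forall u v : 'I_n, u != v -> ~~ e u v -> n + d - 2 <= deg e u + deg e v) ->
  (exists w : 'I_n, forall u v : 'I_n,
      u \in nbhd e w -> v \in nbhd e w -> u != v -> ~~ e u v ->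
      Rd_linked R d e u v) ->
  rigid R d e.
Proof.
move=> sg hdeg [w hw] P gP [f [cf f0 hE [t [u [v [ht hne]]]]]].
have HA : (rmat (@Kc n) P <= rmat e P)%MS.
  apply: sub_flex => c hc.
  have -> : c = trmx (mxvec (vec_mx (trmx c))) by rewrite vec_mxK trmxK.
  apply: rmat_flex0 => a b _.
  apply: (stepA sg hdeg hw gP) => a' b' eab.
  apply: (rmat_flex1 _ eab).
  by rewrite vec_mxK trmxK.
have := global_T gP HA cf f0 hE ht u v.
by move/eqP; rewrite (negPf hne).
Qed.
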